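(* In the HTLC setting described in the context, if $\mathcal{A}$ follows her prescribed behavior, then $\mathcal{B}$ can bribe the miners at a cost of $\frac{f^{h}_{\mathcal{A}}-f}{\lambda_{\min}}+f$; that is, if $\mathcal{B}$ publishes $tx^{h}_{\mathcal{B}}$ with fee $f^{h}_{\mathcal{B}}>\frac{f^{h}_{\mathcal{A}}-f}{\lambda_{\min}}+f$, then the subgame perfect equilibrium of the game $G^{H}(1,\mathrm{red})$ is for all miners to include unrelated transactions in rounds $1,\dots,T-1$ and to include $\mathcal{B}$'s transaction $tx^{h}_{\mathcal{B}}$ in round $T$.
   Context: Blockchain model: $n$ miners; miner $i$ has mining power $\lambda_i>0$, $\sum_i\lambda_i=1$, $\lambda_{\min}=\min_i\lambda_i$. Each round exactly one miner is chosen, miner $i$ with probability $\lambda_i$, and creates a block containing one transaction of her choice, receiving its fee. An unrelated transaction offering base fee $f$ is always available. A contract can be redeemed at most once. Miners are rational, non-myopic, with perfect information, maximizing expected tokens at the end of the game. HTLC: a contract holding $v^{\mathrm{dep}}$ tokens initiated in block $b_j$, with digest $dig_a=H(pre_a)$ and timeout $T$, redeemable via htlc-A (signature of $\mathcal{A}$ and $pre_a$; any block) or htlc-B (signature of $\mathcal{B}$; only in a block at least $T$ blocks after initiation). Prescribed behavior of $\mathcal{A}$: if she knows $pre_a$, she publishes, right after block $b_j$ (i.e. in the first round), a transaction $tx^{h}_{\mathcal{A}}$ redeeming the HTLC via htlc-A with fee $f^{h}_{\mathcal{A}}$, $f<f^{h}_{\mathcal{A}}<v^{\mathrm{dep}}$.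 $\mathcal{B}$'s transaction $tx^{h}_{\mathcal{B}}$ redeems via htlc-B with fee $f^{h}_{\mathcal{B}}$, $f<f^{h}_{\mathcal{B}}<v^{\mathrm{dep}}$. The HTLC game has $T$ rounds creating $b_{j+1},\dots,b_{j+T}$; a miner can include an unrelated transaction in any round, $tx^{h}_{\mathcal{A}}$ in any round while the HTLC is unredeemed, and $tx^{h}_{\mathcal{B}}$ only in round $T$ while the HTLC is unredeemed. $G^{H}(k,s)$ is the subgame just before round $k$ with the HTLC redeemable ($\mathrm{red}$) or not; the full game is $G^{H}(1,\mathrm{red})$. *)

(* Defs.v *)
From HB Require Import structures.
From mathcomp Require Import all_boot all_order all_algebra.
Set Implicit Arguments. Unset Strict Implicit. Unset Printing Implicit Defensive.
Import Order.TTheory GRing.Theory Num.Theory.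
Local Open Scope ring_scope.

(** Transactions a miner may put in her block:
    [Unrel] = unrelated transaction (fee f), [IncA] = tx^h_A (fee f^h_A),
    [IncB] = tx^h_B (fee f^h_B). *)
Inductive action := Unrel | IncA | IncB.

Definition action_eqb (a b : action) : bool :=
  match a, b with
  | Unrel, Unrel | IncA, IncA | IncB, IncB => true | _, _ => false end.
Lemma action_eqP : Equality.axiom action_eqb.
Proof. by case; case; constructor. Qed.
HB.instance Definition _ := hasDecEq.Build action action_eqP.

(** Feasibility of action [a] in round [k] (1 <= k <= T) when the HTLC state
    is [s] (true = redeemable): unrelated always; tx_A while unredeemed;
    tx_B only in round T while unredeemed. *)
Definition feasible (T k : nat) (s : bool) (a : action) : bool :=
  match a with
  | Unrel => true
  | IncA => s
  | IncB => s && (k == T)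
  end.

Definition next_state (s : bool) (a : action) : bool :=
  match a with Unrel => s | _ => false end.

Section Game.
Variables (R : realFieldType) (n : nat) (lam : 'I_n -> R)
          (f fA fB : R) (T : nat).

Definition fee (a : action) : R :=
  match a with Unrel => f | IncA => fA | IncB => fB end.

(** A (state-based) strategy of a miner: the action she takes when selected
    in round k while the HTLC is in state s.  A profile gives one per miner. *)
Definition strategy := nat -> bool -> action.
Definition profile := 'I_n -> strategy.

Definition feasible_strategy (t : strategy) : Prop :=
  forall k s, (1 <= k <= T)%N -> feasible T k s (t k s).

Definition feasible_profile (sigma : profile) : Prop :=
  forall i, feasible_strategy (sigma i).

(** Expected tokens earned by miner [i] in the next [m] rounds, starting
    with round [k] in state [s]: each round miner j is selected w.p. lam j. *)
Fixpoint value (sigma : profile) (i : 'I_n) (m k : nat) (s : bool) : R :=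
  match m with
  | 0 => 0
  | m'.+1 =>
      \sum_(j < n) lam j *
        ((j == i)%:R * fee (sigma j k s)
         + value sigma i m' k.+1 (next_state s (sigma j k s)))
  end.

(** Expected payoff of miner [i] in the subgame G^H(k, s) (rounds k..T). *)
Definition payoff (sigma : profile) (i : 'I_n) (k : nat) (s : bool) : R :=
  value sigma i (T.+1 - k) k s.

Definition deviate (sigma : profile) (i : 'I_n) (t : strategy) : profile :=
  fun j => if j == i then t else sigma j.

Definition is_SPE (sigma : profile) : Prop :=
  feasible_profile sigma /\
  forall k s, (1 <= k <= T)%N ->
    forall (i : 'I_n) (t : strategy), feasible_strategy t ->
      payoff (deviate sigma i t) i k s <= payoff sigma i k s.

End Game.

Definition bribe_profile (n T : nat) : 'I_n -> nat -> bool -> action :=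
  fun _ k s => if (k == T) && s then IncB else Unrel.
Arguments bribe_profile : clear implicits.

(* Main.v *)
Require Import Defs.
From mathcomp Require Import all_boot all_order all_algebra.
From mathcomp Require Import ring lra zify.
Import Order.TTheory GRing.Theory Num.Theory.
Local Open Scope ring_scope.

Lemma sum_delta (R : realFieldType) n (lam : 'I_n -> R) (i : 'I_n) (x y : 'I_n -> R) :
  \sum_j lam j * ((j == i)%:R * x j + y j) = lam i * x i + \sum_j lam j * y j.
Proof.
under eq_bigr do rewrite mulrDr.
rewrite big_split /=; congr (_ + _).
rewrite (bigD1 i) //= eqxx mul1r big1 ?addr0 // => j /negbTE ->.
by rewrite /= mul0r mulr0.
Qed.

Lemma value_split (R : realFieldType) n (lam : 'I_n -> R) f fA fB sig i m k s :
  value lam f fA fB sig i m.+1 k s =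
  lam i * (fee f fA fB (sig i k s) + value lam f fA fB sig i m k.+1 (next_state s (sig i k s)))
  + \sum_(j | j != i) lam j * value lam f fA fB sig i m k.+1 (next_state s (sig j k s)).
Proof.
rewrite /= (bigD1 i) //= eqxx mul1r; congr (_ + _).
by apply: eq_bigr => j /negbTE ->; rewrite mul0r add0r.
Qed.

Lemma value_local (R : realFieldType) n (lam : 'I_n -> R) f fA fB s1 s2 i m :
  forall k s, (forall j k' s', (k <= k' < k + m)%N -> s1 j k' s' = s2 j k' s') ->
  value lam f fA fB s1 i m k s = value lam f fA fB s2 i m k s.
Proof.
elim: m => [//|m IH] k s H /=.
apply: eq_bigr => j _.
have -> : s1 j k s = s2 j k s by apply: H; rewrite leqnn /= addnS ltnS leq_addr.
rewrite (IH k.+1) // => j' k' s' /andP[h1 h2]; apply: H.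
by rewrite (ltnW h1) /= -addSnnS.
Qed.

Lemma value_bribe (R : realFieldType) n (lam : 'I_n -> R) f fA fB T i m k s
  (lam_sum : \sum_(i < n) lam i = 1) :
  value lam f fA fB (bribe_profile n T) i m.+1 k s =
  lam i * fee f fA fB (if (k == T) && s then IncB else Unrel)
  + value lam f fA fB (bribe_profile n T) i m k.+1
      (next_state s (if (k == T) && s then IncB else Unrel)).
Proof.
rewrite /= (sum_delta _ _ lam i (fun j => fee f fA fB _) (fun j => value _ _ _ _ _ _ _ _ _)).
by rewrite /bribe_profile -mulr_suml lam_sum mul1r.
Qed.

Lemma value_false (R : realFieldType) n (lam : 'I_n -> R) f fA fB T i m k
  (lam_sum : \sum_(i < n) lam i = 1) :
  value lam f fA fB (bribe_profile n T) i m k false = m%:R * (lam i * f).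
Proof.
elim: m k => [|m IH] k; first by rewrite mul0r.
rewrite value_bribe // andbF /= IH -add1n natrD mulrDl mul1r. done.
Qed.

Lemma value_true (R : realFieldType) n (lam : 'I_n -> R) f fA fB T i m k
  (lam_sum : \sum_(i < n) lam i = 1) : (k + m = T)%N ->
  value lam f fA fB (bribe_profile n T) i m.+1 k true = m%:R * (lam i * f) + lam i * fB.
Proof.
elim: m k => [|m IH] k hk.
  by rewrite value_bribe // addn0 in hk *; rewrite hk eqxx /= mul0r add0r addr0.
rewrite value_bribe //.
have -> : (k == T) = false by apply/negbTE; rewrite -hk; apply/eqP; lia.
rewrite andbT [next_state _ _]/= IH; last by rewrite -hk addSnnS.
by rewrite /= -add1n natrD; ring.
Qed.

Lemma one_shot (R : realFieldType) n (lam : 'I_n -> R) f fA fB T i m k s a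
  (lam_sum : \sum_(i < n) lam i = 1)
  (hfA : f < fA) (hAB : fA < fB) (key : fA - f < lam i * fB - lam i * f) :
  (k + m.+1 = T.+1)%N -> feasible T k s a ->
  fee f fA fB a + value lam f fA fB (bribe_profile n T) i m k.+1 (next_state s a)
  <= fee f fA fB (bribe_profile n T i k s)
     + value lam f fA fB (bribe_profile n T) i m k.+1
         (next_state s (bribe_profile n T i k s)).
Proof.
move=> hk; have -> : bribe_profile n T i k s = if (k == T) && s then IncB else Unrel by [].
case: s; last by case: a => //= _; rewrite andbF.
rewrite andbT; case: (eqVneq k T) => [ekT|nkT].
  have -> : m = 0%N by lia.
  by case: a => /= _; rewrite !addr0 ?lexx; lra.
case: m hk => [|m] hk; first by exfalso; apply/eqP: nkT; lia.
case: a; [by rewrite lexx | | by rewrite /= (negbTE nkT)].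
move=> _; rewrite [next_state _ _]/= [next_state _ _]/= [fee _ _ _ _]/= [fee _ _ _ _]/= value_false // value_true //; last by lia.
rewrite -addn1 natrD mulrDl mul1r; lra.
Qed.

Theorem theorem2 (R : realFieldType) (n : nat) (lam : 'I_n -> R) (lmin : R)
    (f fA fB vdep : R) (T : nat)
    (lam_pos : forall i, 0 < lam i)
    (lam_sum : \sum_(i < n) lam i = 1)
    (lmin_le : forall i, lmin <= lam i)
    (lmin_att : exists i, lam i = lmin)
    (hfA : f < fA) (hfAv : fA < vdep)
    (hfB : f < fB) (hfBv : fB < vdep)
    (bribe : (fA - f) / lmin + f < fB) :
  is_SPE lam f fA fB T (bribe_profile n T) /\
  forall sigma : 'I_n -> nat -> bool -> action,
    is_SPE lam f fA fB T sigma ->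
    forall (i : 'I_n) (k : nat) (s : bool), (1 <= k <= T)%N ->
      sigma i k s = bribe_profile n T i k s.
Proof.
have [i0 hi0] := lmin_att.
have lpos : 0 < lmin by rewrite -hi0.
have lle1 : lmin <= 1.
  rewrite -lam_sum (bigD1 i0) //= hi0 lerDl; apply: sumr_ge0 => j _.
  exact: ltW.
have key0 : fA - f < (fB - f) * lmin.
  by rewrite -ltr_pdivrMr //; lra.
have key : forall i, fA - f < lam i * fB - lam i * f.
  move=> i; apply: (lt_le_trans key0); rewrite -mulrBr mulrC.
  by apply: ler_wpM2r; [lra | apply: lmin_le].
have hAB : fA < fB by nra.
split.
  split.
    move=> i k s _; rewrite /bribe_profile.
    by case: s; rewrite ?andbF ?andbT //; case: eqP => //= ->; rewrite eqxx.
  move=> k s hk i t ht; rewrite /payoff.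
  suff H : forall m k s, (1 <= k)%N -> (k + m = T.+1)%N ->
    value lam f fA fB (deviate (bribe_profile n T) i t) i m k s
    <= value lam f fA fB (bribe_profile n T) i m k s.
    by apply: H; lia.
  clear hk; elim=> [|m IH] {}k {}s h1 h2; first by [].
  rewrite /=; apply: ler_sum => j _.
  have dv : forall j, deviate (bribe_profile n T) i t j =
      if j == i then t else bribe_profile n T j by [].
  rewrite dv; case: (eqVneq j i) => [->|ne].
    apply: ler_wpM2l; first exact: ltW.
    rewrite /= !mul1r.
    apply: le_trans (one_shot _ _ lam f fA fB T i m k s (t k s) lam_sum hfA hAB (key i) h2 _); last first.
      by apply: ht; lia.
    by rewrite lerD2l; apply: IH; lia.
  apply: ler_wpM2l; first exact: ltW.
  by rewrite lerD2l; apply: IH; lia.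
move=> sigma [feas spe].
have hfalse : forall j k, (1 <= k <= T)%N -> sigma j k false = bribe_profile n T j k false.
  move=> j k hk; have := feas j k false hk.
  by rewrite /bribe_profile andbF; case: (sigma j k false).
pose ag k := forall j k' s, (k <= k' <= T)%N -> sigma j k' s = bribe_profile n T j k' s.
suff H : forall m k, (1 <= k)%N -> (k + m = T)%N -> ag k.
  move=> i k s hk; apply: (H (T - k)%N k); lia.
elim=> [|m IH] k h1 h2 j k' s hk'.
  have ekT : k' = T by lia.
  subst k'; case: s; last by apply: hfalse; lia.
  rewrite /bribe_profile !eqxx /=.
  pose t := fun k s => if (k == T) && s then IncB else sigma j k s.
  have ft : feasible_strategy T t.
    move=> k2 s2 hk2; rewrite /t; case: ifP => [/andP[/eqP -> ->]|_];
    [by rewrite /= eqxx | exact: feas].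
  have hT : (0 < T <= T)%N by lia.
  have := spe T true hT j t ft; rewrite /payoff subSnn !value_split /=.
  rewrite /deviate eqxx /t eqxx /= lerD2r !addr0 ler_pM2l //.
  by case: (sigma j T true) => //= hle; exfalso; lra.
case: (eqVneq k' k) => [ek|nk]; last by apply: (IH k.+1) => //; lia.
subst k'; case: s; last by apply: hfalse; lia.
have hk : (0 < k <= T)%N by lia.
have hkT : (k == T) = false by apply/eqP; lia.
rewrite /bribe_profile hkT /=.
have := feas j k true hk; case hj: (sigma j k true) => //=; last by rewrite hkT.
move=> _; exfalso.
pose t := fun k2 s2 => if (k2 == k) && s2 then Unrel else sigma j k2 s2.
have ft : feasible_strategy T t.
  move=> k2 s2 hk2; rewrite /t; case: ifP => [_|_]; [by [] | exact: feas].
have hloc : forall s', value lam f fA fB (deviate sigma j t) j m.+1 k.+1 s'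
    = value lam f fA fB sigma j m.+1 k.+1 s'.
  move=> s'; apply: value_local => j2 k2 s2 hk2; rewrite /deviate.
  case: eqP => // ->; rewrite /t.
  by have -> : (k2 == k) = false by apply/eqP; lia.
have hb : forall s', value lam f fA fB sigma j m.+1 k.+1 s'
    = value lam f fA fB (bribe_profile n T) j m.+1 k.+1 s'.
  by move=> s'; apply: value_local => j2 k2 s2 hk2; apply: (IH k.+1) => //; lia.
have dj : deviate sigma j t j k true = Unrel by rewrite /deviate eqxx /t eqxx.
have := spe k true hk j t ft; rewrite /payoff.
have -> : (T.+1 - k = m.+2)%N by lia.
rewrite value_split [X in _ <= X]value_split.
rewrite (eq_bigr (fun j' => lam j' * value lam f fA fB sigma j m.+1 k.+1
   (next_state true (sigma j' k true)))); last first.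
  by move=> j' ne; rewrite hloc /deviate (negbTE ne).
rewrite lerD2r hloc dj hj [next_state _ _]/= [next_state _ _]/=.
rewrite [fee _ _ _ _]/= [fee _ _ _ _]/= !hb value_true // ?value_false //; last by lia.
rewrite ler_pM2l // -addn1 natrD mulrDl mul1r.
have := key j; lra.
Qed.
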